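(* For every $\varepsilon>0$ and $n\in\mathbb{N}$ there exists $N\in\mathbb{N}$ such that the following holds for every $N$-partitioned hypergraph $H$ and every choice of vertices $\gamma_{ik},\gamma^1_{ik},\gamma^2_{ik}\in V_{ik}$, $i<k$, $i,k\in[N]$. For $i<j<k<\ell$ in $[N]$ let $A_{ijk\ell}\subseteq V_{jk}$ be the set of left neighbors of $\gamma_{j\ell}$ in the $(j,k,\ell)$-triad, $B_{ijk\ell}\subseteq V_{jk}$ the set of right neighbors of $\gamma_{ik}$ in the $(i,j,k)$-triad, and $X_{ijk\ell}=V_{jk}\setminus(A_{ijk\ell}\cup B_{ijk\ell})$; define $A^1_{ijk\ell},B^1_{ijk\ell},X^1_{ijk\ell}$ in the same way with $\gamma^1$ in place of $\gamma$, and $A^2_{ijk\ell},B^2_{ijk\ell},X^2_{ijk\ell}$ with $\gamma^2$ in place of $\gamma$. Then there exist an induced $n$-partitioned subhypergraph $H_0$ of $H$ with index set $I$ and reals $d_{\kappa\kappa^1\kappa^2}\in[0,1]$, indexed by $\kappa,\kappa^1,\kappa^2\in\{A,B,X\}$, such that $$\left|\frac{|\kappa_{ijk\ell}\cap(\kappa^1)^1_{ijk\ell}\cap(\kappa^2)^2_{ijk\ell}|}{|V_{jk}|}-d_{\kappa\kappa^1\kappa^2}\right|\le\varepsilon$$ for all $\kappa,\kappa^1,\kappa^2\in\{A,B,X\}$ and all $i<j<k<\ell$ in $I$ (where $\kappa_{ijk\ell}$ denotes $A_{ijk\ell}$, $B_{ijk\ell}$ or $X_{ijk\ell}$ according to $\kappa$,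 and similarly for the superscripted sets). Moreover, if for all $i<j<k<\ell$ the sets $A_{ijk\ell}$ and $B_{ijk\ell}$ are disjoint, $A^1_{ijk\ell}$ and $B^1_{ijk\ell}$ are disjoint, and $A^2_{ijk\ell}$ and $B^2_{ijk\ell}$ are disjoint, then $\sum_{\kappa,\kappa^1,\kappa^2\in\{A,B,X\}}d_{\kappa\kappa^1\kappa^2}\le 1+27\varepsilon$.
   Context: An $n$-partitioned hypergraph $H$ is a finite $3$-uniform hypergraph whose vertex set is partitioned into nonempty sets $V_{ij}$, $1\le i<j\le n$, such that every edge has, for some $1\le i<j<k\le n$, exactly one vertex in each of $V_{ij}$, $V_{ik}$, $V_{jk}$; the set of such edges is the $(i,j,k)$-triad. For $v\in V_{ik}$, a left neighbor (right neighbor) of $v$ in the $(i,j,k)$-triad is a vertex of $V_{ij}$ (of $V_{jk}$) contained together with $v$ in an edge of that triad. For $I\subseteq[n]$, the induced subhypergraph with index set $I$ is the $|I|$-partitioned hypergraph with parts $V_{ij}$, $i<j$, $i,j\in I$ (indexed by elements of $I$) and all edges of $H$ inside these parts. *)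

(* Defs.v *)
From HB Require Import structures.
From mathcomp Require Import all_boot all_order all_algebra.
From mathcomp Require Import reals.
Set Implicit Arguments. Unset Strict Implicit. Unset Printing Implicit Defensive.

(* An N-partitioned hypergraph: vertex type V (finite), part assignment
   part v = (i,j) meaning v \in V_ij (indices in 'I_N, 0-based), and the
   edge set E of 3-element vertex sets. *)

Section Hyp.
Variables (N : nat) (V : finType) (part : V -> 'I_N * 'I_N) (E : {set {set V}}).

Definition Vpart (i j : 'I_N) : {set V} := [set v | part v == (i, j)].

Definition triad_shape (i j k : 'I_N) (e : {set V}) : bool :=
  (i < j < k)%N &&
  [exists a : V, exists b : V, exists c : V,
     [&& e == [set a; b; c], part a == (i, j), part b == (i, k)
       & part c == (j, k)]].

Definition is_npart : Prop :=
  (forall v : V, ((part v).1 < (part v).2)%N) /\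
  (forall i j : 'I_N, (i < j)%N -> exists v : V, part v = (i, j)) /\
  (forall e, e \in E -> exists i j k : 'I_N, triad_shape i j k e).

Definition left_nbrs (i j k : 'I_N) (v : V) : {set V} :=
  [set u | (part u == (i, j)) &&
           [exists e in E, [&& triad_shape i j k e, u \in e & v \in e]]].

Definition right_nbrs (i j k : 'I_N) (v : V) : {set V} :=
  [set u | (part u == (j, k)) &&
           [exists e in E, [&& triad_shape i j k e, u \in e & v \in e]]].

Variable gamma : 'I_N -> 'I_N -> V.

Definition Aset (i j k l : 'I_N) : {set V} := left_nbrs j k l (gamma j l).
Definition Bset (i j k l : 'I_N) : {set V} := right_nbrs i j k (gamma i k).
Definition Xset (i j k l : 'I_N) : {set V} :=
  Vpart j k :\: (Aset i j k l :|: Bset i j k l).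

(* kappa \in {A,B,X} encoded as 'I_3 : 0 = A, 1 = B, 2 = X *)
Definition kset (kap : 'I_3) (i j k l : 'I_N) : {set V} :=
  match val kap with
  | 0 => Aset i j k l
  | 1 => Bset i j k l
  | _ => Xset i j k l
  end.

End Hyp.

(* Main.v *)
Require Import Defs.
From HB Require Import structures.
From mathcomp Require Import all_boot all_order all_algebra.
From mathcomp Require Import reals.
Import Order.TTheory GRing.Theory Num.Theory.
From mathcomp Require Import lra.
Local Set Implicit Arguments. Local Unset Strict Implicit.

Lemma cards_uniq (T : finType) (s : seq T) : uniq s -> #|[set x in s]| = size s.
Proof. move=> u; rewrite cardsE; exact/card_uniqP. Qed.

Lemma subset_size (T : finType) (A : {set T}) k : k <= #|A| ->
  exists B : {set T}, B \subset A /\ #|B| = k.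
Proof.
move=> hk; exists [set x in take k (enum A)]; split.
  by apply/subsetP=> x; rewrite inE => /mem_take; rewrite mem_enum.
rewrite cards_uniq ?take_uniq ?enum_uniq //.
by rewrite size_take -cardE; case: ltngtP hk => // ->.
Qed.

Section Ram.
Variables (T C : finType) (f : {set T} -> C) (r : nat).

Fixpoint good (vs : seq (T * C)) : Prop :=
  match vs with
  | [::] => True
  | p :: rest => [/\ p.1 \notin map fst rest,
       (forall U : {set T}, U \subset [set x in map fst rest] -> #|U| = r -> f (p.1 |: U) = p.2)
       & good rest]
  end.

Lemma good_filter (P : pred (T * C)) vs : good vs -> good (filter P vs).
Proof.
elim: vs => [|[v c] rest IH] //= [h1 h2 h3].
have sub : {subset map fst (filter P rest) <= map fst rest}.
  by move=> x /mapP [y]; rewrite mem_filter => /andP [_ hy] ->; apply: map_f.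
case: (P (v, c)); last exact: IH. split; last exact: IH.
- by apply/negP => /sub; apply/negP.
- move=> U hU hr; apply: h2 hr; apply: subset_trans hU _.
  by apply/subsetP => x; rewrite !inE => /sub.
Qed.

Lemma good_take k vs : good vs -> good (take k vs).
Proof.
elim: vs k => [|[v c] rest IH] [|k] //= [h1 h2 h3].
have sub : {subset map fst (take k rest) <= map fst rest}.
  by move=> x /mapP [y] /mem_take hy ->; apply: map_f.
split; last exact: IH.
- by apply/negP => /sub; apply/negP.
- move=> U hU hr; apply: h2 hr; apply: subset_trans hU _.
  by apply/subsetP => x; rewrite !inE => /sub.
Qed.

Lemma good_uniq vs : good vs -> uniq (map fst vs).
Proof. by elim: vs => [|[v c] rest IH] //= [h1 _ h3]; rewrite h1 IH. Qed.

Lemma good_homog vs col : good vs -> all (fun p => p.2 == col) vs ->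
  forall U : {set T}, U \subset [set x in map fst vs] -> #|U| = r.+1 -> f U = col.
Proof.
elim: vs => [|[v c] rest IH] /=.
  move=> _ _ U hU hc; suff : U = set0 by move=> e; rewrite e cards0 in hc.
  by apply/eqP; rewrite -subset0; apply: subset_trans hU _; apply/subsetP=> x; rewrite inE.
move=> [h1 h2 h3] /andP [/eqP hc hall] U hU hcard.
case hv: (v \in U).
  have -> : U = v |: (U :\ v) by rewrite setD1K.
  rewrite h2 ?hc //.
    apply/subsetP => x; rewrite !inE => /andP [hxv hxU].
    by move/subsetP: hU => /(_ x hxU); rewrite !inE (negPf hxv).
  by move: hcard; rewrite (cardsD1 v U) hv => -[].
apply: IH => //; apply/subsetP => x hx; move/subsetP: hU => /(_ x hx).
rewrite !inE; case/orP => // /eqP ex; by rewrite -ex hx in hv.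
Qed.

End Ram.

Lemma sum_count (C : finType) (s : seq C) :
  \sum_(c : C) count (pred1 c) s = size s.
Proof.
elim: s => [|x s IH] /=; first by rewrite big1.
by rewrite big_split /= IH (bigD1 x) //= eqxx big1 ?add1n ?addn0 // => i /negPf; rewrite eq_sym => ->.
Qed.

Lemma pigeon (C : finType) (s : seq C) n : #|C| * n < size s ->
  exists col, n <= count (pred1 col) s.
Proof.
move=> hs; case: (boolP [exists col, n <= count (pred1 col) s]).
  by move/existsP.
move/existsPn => hn; exfalso.
have : size s <= #|C| * n.
  rewrite -sum_count -sum1_card big_distrl /=; apply: leq_sum => c _.
  by rewrite mul1n ltnW // ltnNge hn.
by rewrite leqNgt hs.
Qed.

Definition homog (T C : finType) (f : {set T} -> C) r (H : {set T}) (col : C) :=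
  forall U : {set T}, U \subset H -> #|U| = r -> f U = col.

Lemma ramsey r : forall (C : finType) n, exists N, forall (T : finType)
  (f : {set T} -> C) (D : {set T}), N <= #|D| ->
  exists H : {set T}, [/\ H \subset D, #|H| = n & exists col, homog f r H col].
Proof.
elim: r => [|r IHr] C n.
  exists n => T f D hD; have [H [hHD hH]] := subset_size hD.
  exists H; split => //; exists (f set0) => U _ /eqP; rewrite cards_eq0 => /eqP -> //.
have chain : forall m, exists L, forall (T : finType) (f : {set T} -> C) (D : {set T}),
   L <= #|D| -> exists vs : seq (T * C),
   [/\ size vs = m, all (fun p => p.1 \in D) vs & good f r vs].
  elim=> [|m [Lm hLm]]; first by exists 0 => T f D _; exists [::].
  have [Nr hNr] := IHr C Lm.
  exists Nr.+1 => T f D hD.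
  have : 0 < #|D| by apply: leq_trans hD.
  case/card_gt0P => v hv.
  have hD' : Nr <= #|D :\ v| by move: hD; rewrite (cardsD1 v D) hv.
  have [H [hHD hH [col hcol]]] := hNr T (fun U => f (v |: U)) _ hD'.
  have [vs [hs hall hg]] := hLm T f H (eq_leq (esym hH)).
  have hvsH : {subset map fst vs <= H}.
    by move=> x /mapP [p hp ->]; move/allP: hall => /(_ p hp).
  exists ((v, col) :: vs); split => //=.
  - by rewrite hs.
  - rewrite hv /=; apply/allP => p hp; move/allP: hall => /(_ p hp) hpH.
    by move/subsetP: hHD => /(_ _ hpH); rewrite inE => /andP [].
  - split => //.
    + apply/negP => /hvsH hvH; move/subsetP: hHD => /(_ _ hvH).
      by rewrite !inE eqxx.
    + move=> U hU hr; apply: hcol hr; apply: subset_trans hU _.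
      by apply/subsetP => x; rewrite inE => /hvsH.
have [L hL] := chain (#|C| * n).+1.
exists L => T f D hD.
have [vs [hs hall hg]] := hL T f D hD.
have [col hcol] : exists col, n <= count (pred1 col) (map snd vs).
  by apply: pigeon; rewrite size_map hs.
rewrite count_map in hcol.
set ws := take n (filter (preim snd (pred1 col)) vs).
have hgw : good f r ws by apply: good_take; apply: good_filter.
exists [set x in map fst ws]; split.
- apply/subsetP => x; rewrite inE => /mapP [p hp ->].
  move: hp => /mem_take; rewrite mem_filter => /andP [_ hp].
  by move/allP: hall => /(_ p hp).
- rewrite cards_uniq; last exact: good_uniq hgw.
  by rewrite size_map size_take size_filter; case: ltngtP hcol.
- exists col => U hU hr; apply: good_homog hgw _ U hU hr.
  apply/allP => p /mem_take; rewrite mem_filter => /andP [] //.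
Qed.

Lemma card_sum (T : finType) (A : {set T}) : #|A| = \sum_x (x \in A).
Proof. by rewrite -sum1_card big_mkcond. Qed.

Lemma part3 (T : finType) (W : {set T}) (P Q S : 'I_3 -> {set T}) :
  (forall x, \sum_(a < 3) (x \in P a) = (x \in W)) ->
  (forall x, \sum_(a < 3) (x \in Q a) = (x \in W)) ->
  (forall x, \sum_(a < 3) (x \in S a) = (x \in W)) ->
  \sum_(a < 3) \sum_(b < 3) \sum_(c < 3) #|P a :&: Q b :&: S c| = #|W|.
Proof.
move=> hP hQ hS.
have e : forall x, (x \in W : nat) = \sum_(a < 3) \sum_(b < 3) \sum_(c < 3)
   ((x \in P a) * (x \in Q b) * (x \in S c)).
  move=> x; have -> : (x \in W : nat) = (x \in W) * (x \in W) * (x \in W).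
    by case: (x \in W).
  rewrite -{1}hP -{1}hQ -{1}hS -mulnA big_distrl /=; apply: eq_bigr => a _.
  rewrite big_distrl big_distrr /=; apply: eq_bigr => b _.
  rewrite big_distrr big_distrr /=; apply: eq_bigr => c _.
  by rewrite mulnA.
rewrite [RHS]card_sum; under [RHS]eq_bigr => x _ do rewrite e.
symmetry.
rewrite exchange_big; apply: eq_bigr => a _.
rewrite exchange_big; apply: eq_bigr => b _.
rewrite exchange_big; apply: eq_bigr => c _.
by rewrite card_sum; apply: eq_bigr => x _; rewrite !inE !mulnb.
Qed.

Lemma enum_sorted m (A : {set 'I_m}) : sorted (fun x y : 'I_m => (x < y)%N) (enum A).
Proof.
rewrite /enum_mem -enumT; apply: sorted_filter; first by move=> x y z; apply: ltn_trans.
by have := iota_ltn_sorted 0 m; rewrite -val_enum_ord sorted_map.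
Qed.

Lemma enum4 m (i j k l : 'I_m) : (i < j < k)%N -> (k < l)%N ->
  enum [set i; j; k; l] = [:: i; j; k; l].
Proof.
move=> /andP [hij hjk] hkl.
apply: (irr_sorted_eq (leT := fun x y : 'I_m => (x < y)%N)).
- by move=> x y z; apply: ltn_trans.
- by move=> x; rewrite ltnn.
- exact: enum_sorted.
- by rewrite /= hij hjk hkl.
- by move=> x; rewrite mem_enum !inE ?orbF !orbA.
Qed.
Local Unset Implicit Arguments. Local Set Strict Implicit.
Local Open Scope ring_scope.

Lemma approx (R : realType) (eps x : R) (K : nat) : 0 < eps -> eps^-1 < K%:R ->
  0 <= x <= 1 -> (Num.truncn (x * K%:R) <= K)%N /\
  `|x - (Num.truncn (x * K%:R))%:R / K%:R| <= eps.
Proof.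
move=> he hK /andP [x0 x1].
have Kp : 0 < K%:R :> R by apply: lt_trans hK; rewrite invr_gt0.
set t := Num.truncn (x * K%:R).
have xK0 : 0 <= x * K%:R by rewrite mulr_ge0 // ltW.
have h1 : t%:R <= x * K%:R by rewrite truncn_le.
have h2 : x * K%:R < t.+1%:R by apply: truncnS_gt.
have xKK : x * K%:R <= K%:R by rewrite ler_piMl // ltW.
split.
  by rewrite truncn_le_nat; apply: le_lt_trans xKK _; rewrite ltr_nat.
have iK : K%:R^-1 < eps.
  by rewrite -[eps]invrK ltf_pV2 // ?posrE ?invr_gt0.
have e : x - t%:R / K%:R = (x * K%:R - t%:R) / K%:R.
  by rewrite mulrBl -mulrA divff ?mulr1 // gt_eqF.
rewrite e normrM normfV (gtr0_norm Kp) ger0_norm ?subr_ge0 //.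
apply: ltW; apply: le_lt_trans iK; rewrite ler_pdivrMr // mulVf ?gt_eqF //.
move: h2; rewrite -natr1; lra.
Qed.

Lemma sum3_le (R : realType) (F G : 'I_3 -> 'I_3 -> 'I_3 -> R) (e : R) :
  (forall a b c, F a b c <= G a b c + e) ->
  \sum_(a < 3) \sum_(b < 3) \sum_(c < 3) F a b c <=
  \sum_(a < 3) \sum_(b < 3) \sum_(c < 3) G a b c + 27%:R * e.
Proof.
move=> h.
have -> : 27%:R * e = \sum_(a < 3) \sum_(b < 3) \sum_(c < 3) e.
  rewrite !big_const_ord /=; lra.
rewrite -big_split /=; apply: ler_sum => a _.
rewrite -big_split /=; apply: ler_sum => b _.
rewrite -big_split /=; apply: ler_sum => c _.
exact: h.
Qed.
Theorem lemma6p1 (R : realType) (eps : R) (n : nat) :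
  0 < eps ->
  exists N : nat,
  forall (V : finType) (part : V -> 'I_N * 'I_N) (E : {set {set V}}),
  is_npart part E ->
  forall g g1 g2 : 'I_N -> 'I_N -> V,
  (forall i k : 'I_N, (i < k)%N ->
     [/\ part (g i k) = (i, k), part (g1 i k) = (i, k) & part (g2 i k) = (i, k)]) ->
  exists I : {set 'I_N}, #|I| = n /\
  exists d : 'I_3 -> 'I_3 -> 'I_3 -> R,
    (forall a b c : 'I_3, 0 <= d a b c <= 1) /\
    (forall (a b c : 'I_3) (i j k l : 'I_N),
       i \in I -> j \in I -> k \in I -> l \in I ->
       (i < j)%N -> (j < k)%N -> (k < l)%N ->
       `| (#|kset part E g a i j k l :&: kset part E g1 b i j k l
              :&: kset part E g2 c i j k l|)%:R / (#|Vpart part j k|)%:R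
          - d a b c| <= eps) /\
    ((forall i j k l : 'I_N, (i < j)%N -> (j < k)%N -> (k < l)%N ->
        [/\ [disjoint Aset part E g i j k l & Bset part E g i j k l],
            [disjoint Aset part E g1 i j k l & Bset part E g1 i j k l]
          & [disjoint Aset part E g2 i j k l & Bset part E g2 i j k l]]) ->
     \sum_(a < 3) \sum_(b < 3) \sum_(c < 3) d a b c <= 1 + 27%:R * eps).
Proof.
move=> he.
set K := (Num.truncn eps^-1).+1.
have hK : eps^-1 < K%:R by apply: truncnS_gt.
have [Nr hNr] := ramsey 4 {ffun 'I_3 * 'I_3 * 'I_3 -> 'I_K.+1} (maxn n 4).
exists Nr.+1 => V part E hnp g g1 g2 hg.
pose rat (a b c : 'I_3) (i j k l : 'I_Nr.+1) : R :=
  (#|kset part E g a i j k l :&: kset part E g1 b i j k l :&: kset part E g2 c i j k l|)%:R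
   / (#|Vpart part j k|)%:R.
pose colr (U : {set 'I_Nr.+1}) : {ffun 'I_3 * 'I_3 * 'I_3 -> 'I_K.+1} :=
  [ffun t => inord (Num.truncn (rat t.1.1 t.1.2 t.2 (nth ord0 (enum U) 0)
       (nth ord0 (enum U) 1) (nth ord0 (enum U) 2) (nth ord0 (enum U) 3) * K%:R))].
have [H [_ hH [col hcol]]] := hNr _ colr [set: 'I_Nr.+1] ltac:(by rewrite cardsT card_ord).
have [I [hIH hI]] : exists I : {set 'I_Nr.+1}, I \subset H /\ #|I| = n.
  by apply: subset_size; rewrite hH leq_maxl.
exists I; split => //.
pose d (a b c : 'I_3) : R := ((col (a, b, c) : nat)%:R) / K%:R.
exists d.
have Kp : 0 < K%:R :> R by rewrite ltr0n.
have kset_sub : forall gg a (i j k l : 'I_Nr.+1),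
    kset part E gg a i j k l \subset Vpart part j k.
  move=> gg [[|[|a]] ha] i j k l; apply/subsetP => x;
    rewrite /kset /= /Xset /Aset /Bset /left_nbrs /right_nbrs !inE.
  - by case/andP => ->.
  - by case/andP => ->.
  - by case/andP => _ ->.
have qpos : forall j k : 'I_Nr.+1, (j < k)%N -> (0 < #|Vpart part j k|)%N.
  move=> j k hjk; have [v hv] := hnp.2.1 j k hjk.
  by apply/card_gt0P; exists v; rewrite inE hv.
have rat01 : forall a b c (i j k l : 'I_Nr.+1), (j < k)%N -> 0 <= rat a b c i j k l <= 1.
  move=> a b c i j k l hjk; rewrite /rat divr_ge0 //= ler_pdivrMr ?ltr0n ?qpos //.
  rewrite mul1r ler_nat; apply: subset_leq_card.
  apply: subset_trans (kset_sub g a i j k l).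
  by apply: subset_trans (subsetIl _ _); apply: subsetIl.
have approxH : forall a b c (i j k l : 'I_Nr.+1), i \in H -> j \in H -> k \in H -> l \in H ->
    (i < j)%N -> (j < k)%N -> (k < l)%N -> `|rat a b c i j k l - d a b c| <= eps.
  move=> a b c i j k l hi hj hk hl hij hjk hkl.
  have e4 := enum4 (introT andP (conj hij hjk)) hkl.
  have hsub : [set i; j; k; l] \subset H.
    by apply/subsetP => x; rewrite !inE -!orbA => /or4P [] /eqP ->.
  have hc := hcol [set i; j; k; l] hsub (etrans (cardE _) (f_equal size e4)).
  have hcol' : col (a, b, c) = colr [set i; j; k; l] (a, b, c) by rewrite hc.
  rewrite /d hcol' /colr ffunE e4 /=.
  have [ht hap] := approx _ _ _ _ he hK (rat01 a b c i j k l hjk).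
  by rewrite inordK // ltnS.
split.
  move=> a b c; rewrite /d divr_ge0 //= ler_pdivrMr // mul1r ler_nat.
  by rewrite -ltnS ltn_ord.
split.
  move=> a b c i j k l hi hj hk hl hij hjk hkl.
  by apply: approxH => //; apply: (subsetP hIH).
move=> hdisj.
have h4 : (4 <= size (enum H))%N by rewrite -cardE hH leq_maxr.
have ltT : transitive (fun x y : 'I_Nr.+1 => (x < y)%N) by move=> x y z; apply: ltn_trans.
have hs := sorted_ltn_nth ltT ord0 (enum_sorted H).
set i := nth ord0 (enum H) 0; set j := nth ord0 (enum H) 1;
set k := nth ord0 (enum H) 2; set l := nth ord0 (enum H) 3.
have inH : forall m, (m < 4)%N -> nth ord0 (enum H) m \in H.
  by move=> m hm; rewrite -mem_enum mem_nth // (leq_trans hm h4).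
have hij : (i < j)%N by apply: hs; rewrite ?inE // (leq_trans _ h4).
have hjk : (j < k)%N by apply: hs; rewrite ?inE // (leq_trans _ h4).
have hkl : (k < l)%N by apply: hs; rewrite ?inE // (leq_trans _ h4).
have hpt : forall gg, [disjoint Aset part E gg i j k l & Bset part E gg i j k l] ->
    forall x, (\sum_(a < 3) (x \in kset part E gg a i j k l))%N = (x \in Vpart part j k).
  move=> gg hD x; rewrite !big_ord_recr big_ord0 /= /kset /=.
  have hA : x \in Aset part E gg i j k l -> x \in Vpart part j k.
    by apply: (subsetP (kset_sub gg ord0 i j k l)).
  have hB : x \in Bset part E gg i j k l -> x \in Vpart part j k.
    by apply: (subsetP (kset_sub gg (lift ord0 ord0) i j k l)).
  have hAB : x \in Aset part E gg i j k l -> x \in Bset part E gg i j k l -> False.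
    by move=> xa; rewrite (disjointFr hD xa).
  rewrite /Xset in_setD in_setU; move: hA hB hAB.
  case: (x \in Aset _ _ _ _ _ _ _); case: (x \in Bset _ _ _ _ _ _ _);
    case: (x \in Vpart _ _ _) => //=; by move=> h1 h2 h3; exfalso; auto.
have [d0 d1 d2] := hdisj i j k l hij hjk hkl.
have hsum : \sum_(a < 3) \sum_(b < 3) \sum_(c < 3) rat a b c i j k l = 1.
  transitivity ((\sum_(a < 3) \sum_(b < 3) \sum_(c < 3)
     #|kset part E g a i j k l :&: kset part E g1 b i j k l :&: kset part E g2 c i j k l|)%:R
     / (#|Vpart part j k|)%:R : R).
    rewrite natr_sum mulr_suml; apply: eq_bigr => a _.
    rewrite natr_sum mulr_suml; apply: eq_bigr => b _.
    by rewrite natr_sum mulr_suml.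
  rewrite (@part3 _ (Vpart part j k)); [|exact: hpt|exact: hpt|exact: hpt].
  by rewrite divff // pnatr_eq0 -lt0n qpos.
suff hle : forall a b c, d a b c <= rat a b c i j k l + eps.
  by have := @sum3_le R d (fun a b c => rat a b c i j k l) eps hle; rewrite hsum.
move=> a b c.
have := approxH a b c i j k l (inH 0%N erefl) (inH 1%N erefl) (inH 2%N erefl) (inH 3%N erefl) hij hjk hkl.
rewrite ler_norml => /andP [h1 h2]; lra.
Qed.
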